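(* Let $\Gamma$ be an ordered abelian group. The map $\Delta\mapsto\mathcal{O}_\Delta:=\{\infty\}\cup\{\gamma\in\Gamma:\gamma\in\Delta\text{ or }\gamma>\delta\text{ for all }\delta\in\Delta\}$ is a bijection between the convex subgroups of $\Gamma$ and the valuation hyperrings in the hyperfield $\mathcal{T}(\Gamma)$.
   Context: A hyperfield is $(F,+,\cdot,0,1)$ with $+$ a multivalued operation making $(F,+,0)$ a canonical hypergroup (associative, commutative, unique inverses $-x$ with $0\in x+(-x)$, and $z\in x+y\Rightarrow y\in z+(-x)$), $(F,\cdot)$ commutative with $0$ absorbing, $x(y+z)=xy+xz$ ($xA:=\{xa:a\in A\}$), and $F\setminus\{0\}$ an abelian group with neutral $1\neq0$. A hyperring is defined the same way without the unit/group requirement. For an ordered abelian group $(\Gamma,+,<,0)$ and $\infty>\Gamma$ with $\gamma+\infty=\infty+\gamma=\infty$, $\mathcal{T}(\Gamma)$ is the hyperfield on $\Gamma\cup\{\infty\}$ with multiplication $+$, zero $\infty$, unit $0$, and hyperaddition $x\boxplus\infty=\infty\boxplus x=\{x\}$, $x\boxplus y=\{\min\{x,y\}\}$ for $x\neq y$, $x\boxplus x=\{z:x\le z\le\infty\}$. A relational subhyperring of a hyperfield $F$ is a multiplicatively closed $S\subseteq F$ such that $(S,+_S,\cdot,0)$ is a hyperring with $x+_Sy:=(x+y)\cap S$. A valuation hyperring in $F$ is a relational subhyperring $\mathcal{O}$ such that for every non-zero $x\in F$, $x\in\mathcal{O}$ or $x^{-1}\in\mathcal{O}$. A subgroup $\Delta\le\Gamma$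 is convex if $\delta_1<\gamma<\delta_2$ with $\delta_i\in\Delta$ implies $\gamma\in\Delta$. *)

(* Defs.v *)
From mathcomp Require Import all_boot all_algebra.
Set Implicit Arguments. Unset Strict Implicit. Unset Printing Implicit Defensive.
Import GRing.Theory.
Local Open Scope ring_scope.

Definition ordered_abgroup (G : zmodType) (lt : rel G) : Prop :=
  [/\ (forall a, ~~ lt a a),
      (forall a b c, lt a b -> lt b c -> lt a c),
      (forall a b, a != b -> lt a b || lt b a)
    & (forall a b c, lt a b -> lt (a + c) (b + c))].

Definition leo (G : zmodType) (lt : rel G) (a b : G) : bool := (a == b) || lt a b.
Definition mino (G : zmodType) (lt : rel G) (a b : G) : G := if lt a b then a else b.

Definition subgroup (G : zmodType) (D : G -> Prop) : Prop :=
  D 0 /\ (forall a b, D a -> D b -> D (a - b)).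

Definition convex_subgroup (G : zmodType) (lt : rel G) (D : G -> Prop) : Prop :=
  subgroup D /\
  (forall d1 g d2, D d1 -> D d2 -> lt d1 g -> lt g d2 -> D g).

Section Hyper.
Variable F : Type.
Variables (hadd : F -> F -> (F -> Prop)) (mul : F -> F -> F) (zero : F).

Definition hadd_on (S : F -> Prop) (x y : F) : F -> Prop :=
  fun z => hadd x y z /\ S z.

Definition hadd_set_l (S : F -> Prop) (A : F -> Prop) (z : F) : F -> Prop :=
  fun w => exists a, A a /\ hadd_on S a z w.
Definition hadd_set_r (S : F -> Prop) (x : F) (A : F -> Prop) : F -> Prop :=
  fun w => exists a, A a /\ hadd_on S x a w.

Definition is_hyperring_on (S : F -> Prop) : Prop :=
  S zero /\
      (forall x y z w, S x -> S y -> S z ->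
         (hadd_set_l S (hadd_on S x y) z w <-> hadd_set_r S x (hadd_on S y z) w)) /\
      (forall x y w, S x -> S y -> (hadd_on S x y w <-> hadd_on S y x w)) /\
      (forall x w, S x -> (hadd_on S x zero w <-> w = x)) /\
      (forall x, S x -> exists y, [/\ S y, hadd_on S x y zero &
          forall y', S y' -> hadd_on S x y' zero -> y' = y]) /\
      (* reversibility: z ∈ x + y  ->  y ∈ z + (-x) *)
      (forall x y z nx, S x -> S y -> S z -> S nx -> hadd_on S x nx zero ->
          hadd_on S x y z -> hadd_on S z nx y) /\
      (forall x y, S x -> S y -> mul x y = mul y x) /\
      (forall x y z, S x -> S y -> S z -> mul x (mul y z) = mul (mul x y) z) /\
      (forall x, S x -> mul zero x = zero) /\
      (forall x y z w, S x -> S y -> S z ->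
         ((exists a, hadd_on S y z a /\ w = mul x a) <->
          hadd_on S (mul x y) (mul x z) w)).

Definition relational_subhyperring (S : F -> Prop) : Prop :=
  (forall x y, S x -> S y -> S (mul x y)) /\ is_hyperring_on S.

Definition valuation_hyperring (inv : F -> F) (O : F -> Prop) : Prop :=
  relational_subhyperring O /\ (forall x, x <> zero -> O x \/ O (inv x)).

End Hyper.

(* ---------- The hyperfield T(Γ) on option G (None = ∞) ---------- *)
Section Tropical.
Variables (G : zmodType) (lt : rel G).

Definition T_mul (x y : option G) : option G :=
  match x, y with Some a, Some b => Some (a + b) | _, _ => None end.

Definition T_inv (x : option G) : option G :=
  match x with Some a => Some (- a) | None => None end.

Definition T_hadd (x y : option G) : option G -> Prop :=
  match x, y with
  | None, _ => fun z => z = y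
  | _, None => fun z => z = x
  | Some a, Some b =>
      if a == b then (fun z => match z with None => True | Some c => leo lt a c = true end : Prop)
      else (fun z => z = Some (mino lt a b))
  end.

Definition T_zero : option G := None.

Definition O_of (D : G -> Prop) (x : option G) : Prop :=
  match x with None => True | Some g => D g \/ (forall d, D d -> lt d g) end.

Definition T_valuation_hyperring (O : option G -> Prop) : Prop :=
  valuation_hyperring T_hadd T_mul T_zero T_inv O.
End Tropical.

(* Main.v *)
Require Import Defs.
From mathcomp Require Import all_boot all_algebra.
Set Implicit Arguments. Unset Strict Implicit. Unset Printing Implicit Defensive.
Import GRing.Theory.
Local Open Scope ring_scope.
From Stdlib Require Import Classical.

Section Proof.
Variables (G : zmodType) (lt : rel G).
Hypothesis HG : ordered_abgroup lt.

Lemma lt_irr a : ~~ lt a a. Proof. by case: HG. Qed.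
Lemma lt_trans a b c : lt a b -> lt b c -> lt a c.
Proof. case: HG => _ h _ _; exact: h. Qed.
Lemma lt_total a b : a != b -> lt a b || lt b a.
Proof. case: HG => _ _ h _; exact: h. Qed.
Lemma lt_addr a b c : lt a b -> lt (a + c) (b + c).
Proof. case: HG => _ _ _ h; exact: h. Qed.
Lemma lt_asym a b : lt a b -> ~~ lt b a.
Proof. move=> h; apply/negP => h'; by move: (lt_irr a); rewrite (lt_trans h h'). Qed.
Lemma lt_addl a b c : lt a b -> lt (c + a) (c + b).
Proof. rewrite ![c + _]addrC; exact: lt_addr. Qed.
Lemma lt_addr_inv a b c : lt (a + c) (b + c) -> lt a b.
Proof. move=> h; have := lt_addr (-c) h; by rewrite !addrK. Qed.
Lemma lt_opp a b : lt a b -> lt (-b) (-a).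
Proof.
move=> h; have := lt_addr (-a - b) h.
have -> : a + (-a - b) = -b by rewrite addrA subrr add0r.
by have -> : b + (-a - b) = -a by rewrite addrCA subrr addr0.
Qed.
Lemma ltgt a b : [\/ lt a b, a = b | lt b a].
Proof.
case: (eqVneq a b) => [->|/lt_total/orP[]]; by [apply: Or32|apply: Or31|apply: Or33].
Qed.
Lemma leoE a b : leo lt a b = ~~ lt b a.
Proof.
rewrite /leo; case: (ltgt a b) => [h|->|h].
- by rewrite h orbT (negbTE (lt_asym h)).
- by rewrite eqxx (negbTE (lt_irr b)).
- rewrite h (negbTE (lt_asym h)) orbF; apply/eqP => e; move: h; rewrite e; by rewrite (negbTE (lt_irr b)).
Qed.

Definition leT (x y : option G) : bool :=
  match x, y with
  | _, None => true
  | None, Some _ => false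
  | Some a, Some b => leo lt a b
  end.

Lemma leT_refl x : leT x x.
Proof. case: x => //= a; by rewrite leoE lt_irr. Qed.
Lemma leT_trans x y z : leT x y -> leT y z -> leT x z.
Proof.
case: x => [a|]; case: y => [b|]; case: z => [c|] //=; rewrite !leoE => h1 h2.
apply/negP => h; case: (ltgt c b) => [h'|e|h'].
- by move: h2; rewrite h'.
- by move: h1; rewrite -e h.
- by move: h1; rewrite (lt_trans h' h).
Qed.
Lemma leT_total x y : leT x y || leT y x.
Proof.
case: x => [a|]; case: y => [b|] //=; rewrite !leoE.
case: (ltgt a b) => [h|->|h]; by rewrite ?(negbTE (lt_asym h)) ?lt_irr ?orbT.
Qed.
Lemma leT_anti x y : leT x y -> leT y x -> x = y.
Proof.
case: x => [a|]; case: y => [b|] //=; rewrite !leoE => h1 h2.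
by case: (ltgt a b) => [h|->|h]; [move: h2; rewrite h| |move: h1; rewrite h].
Qed.
Lemma leT_ltF x y : ~~ leT x y -> leT y x.
Proof. by move: (leT_total x y) => /orP[->|]. Qed.


Definition P3 x y z : Prop :=
  [/\ leT y x || leT z x, leT x y || leT z y & leT x z || leT y z].

Lemma haddE x y w : T_hadd lt x y w <->
  (if x == y then (leT x w : Prop) else w = (if leT x y then x else y)).
Proof.
case: x => [a|]; case: y => [b|]; rewrite /T_hadd //=.
- rewrite (inj_eq (@Some_inj _)); case: eqP => [e|ne]; first by subst; case: w.
  rewrite /mino (_ : leo lt a b = lt a b); first by case: (lt a b).
  by rewrite /leo; move/eqP/negbTE: ne => ->.
- by case: w.
Qed.

Lemma P3_sym12 x y z : P3 x y z -> P3 y x z.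
Proof. by case=> h1 h2 h3; split=> //; rewrite orbC. Qed.
Lemma P3_rot x y z : P3 x y z -> P3 y z x.
Proof. by case=> h1 h2 h3; split=> //; rewrite orbC. Qed.

Lemma hadd_P3 x y w : T_hadd lt x y w <-> P3 x y w.
Proof.
rewrite haddE; case: eqP => [<-|ne].
  by split; [move=> h; split; rewrite ?leT_refl ?h|case=> _ _ /orP[]].
have key : forall x' y', x' <> y' -> leT x' y' -> (w = x' <-> P3 x' y' w).
  move=> x0 y0 ne0 l; split.
    move=> ->; by split; rewrite ?leT_refl ?l ?orbT.
  case=> /orP[h1|h1] _ /orP[h3|h3].
  - by case: ne0; apply: leT_anti.
  - by case: ne0; apply: leT_anti.
  - exact: leT_anti.
  - by case: ne0; apply: leT_anti => //; apply: leT_trans h3 h1.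
case: ifP => l; first exact: key.
rewrite key; last exact: leT_ltF (negbT l).
  by split; apply: P3_sym12.
by move=> e; apply: ne.
Qed.


Definition P4 x y z w : Prop :=
  [/\ leT y x || leT z x || leT w x, leT x y || leT z y || leT w y,
      leT x z || leT y z || leT w z & leT x w || leT y w || leT z w].

Lemma leT_cases x y : [\/ leT x y /\ ~~ leT y x, x = y | leT y x /\ ~~ leT x y].
Proof.
case: (boolP (leT x y)) => h1; case: (boolP (leT y x)) => h2.
- by apply: Or32; apply: leT_anti.
- by apply: Or31.
- by apply: Or33.
- by move: (leT_total x y); rewrite (negbTE h1) (negbTE h2).
Qed.

Lemma P4_swap12 x y z w : P4 x y z w -> P4 y x z w.
Proof.
case=> h1 h2 h3 h4; split.
- by move: h2; case: (leT x y); case: (leT z y); case: (leT w y).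
- by move: h1; case: (leT y x); case: (leT z x); case: (leT w x).
- by move: h3; case: (leT x z); case: (leT y z); case: (leT w z).
- by move: h4; case: (leT x w); case: (leT y w); case: (leT z w).
Qed.

Lemma P4_rot x y z w : P4 y z x w -> P4 x y z w.
Proof.
case=> h1 h2 h3 h4; split.
- by move: h3; case: (leT y x); case: (leT z x); case: (leT w x).
- by move: h1; case: (leT x y); case: (leT z y); case: (leT w y).
- by move: h2; case: (leT x z); case: (leT y z); case: (leT w z).
- by move: h4; case: (leT x w); case: (leT y w); case: (leT z w).
Qed.

Lemma P4_rot' x y z w : P4 x y z w -> P4 y z x w.
Proof. by move=> h; do 2 apply: P4_rot. Qed.

Lemma assoc_strict x y z w : leT x y -> ~~ leT y x -> P4 x y z w ->
  P3 x y x /\ P3 x z w.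
Proof.
move=> l nl [h1 h2 h3 h4]; split.
  by split; rewrite ?leT_refl ?l ?orbT.
split.
- by move: h1; rewrite (negbTE nl).
- move: h3 => /orP[/orP[->|h]|->]; rewrite ?orbT //.
  by rewrite (leT_trans l h).
- move: h4 => /orP[/orP[->|h]|->]; rewrite ?orbT //.
  by rewrite (leT_trans l h).
Qed.

Lemma assoc_P4 x y z w : (exists a, P3 x y a /\ P3 a z w) <-> P4 x y z w.
Proof.
split.
  case=> a [[a1 a2 a3] [b1 b2 b3]]; split.
  - case/orP: a1 => [->//|h]; case/orP: b1 => h'.
      by rewrite (leT_trans h' h) orbT.
    by rewrite (leT_trans h' h) orbT.
  - case/orP: a2 => [->//|h]; case/orP: b1 => h'.
      by rewrite (leT_trans h' h) orbT.
    by rewrite (leT_trans h' h) orbT.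
  - case/orP: b2 => [h|->]; last by rewrite orbT.
    by case/orP: a3 => h'; rewrite (leT_trans h' h) ?orbT.
  - case/orP: b3 => [h|->]; last by rewrite orbT.
    by case/orP: a3 => h'; rewrite (leT_trans h' h) ?orbT.
move=> H.
case: (leT_cases x y) => [[l nl]|exy|[l nl]].
- by exists x; apply: assoc_strict.
- subst y; case: H => h1 h2 h3 h4.
  case: (leT_cases z w) => [[l nl]|ezw|[l nl]].
  + exists z; split; split; rewrite ?leT_refl ?l ?orbT //.
    by move: h3; rewrite (negbTE nl) orbF orbb.
  + subst w; case: (boolP (leT x z)) => l.
      by exists z; split; split; rewrite ?leT_refl ?l ?orbT.
    exists x; split; split; rewrite ?leT_refl ?orbT //.
    by rewrite (leT_ltF l).
  + exists w; split; split; rewrite ?leT_refl ?l ?orbT //.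
    by move: h4; rewrite (negbTE nl) orbF orbb.
- have [h1 h2] := assoc_strict l nl (P4_swap12 H).
  by exists y; split => //; apply: P3_sym12.
Qed.


Lemma lt_addl_inv a b c : lt (c + a) (c + b) -> lt a b.
Proof. rewrite ![c + _]addrC; exact: lt_addr_inv. Qed.

Lemma leT_mul c x y :
  leT (T_mul (Some c) x) (T_mul (Some c) y) = leT x y.
Proof.
case: x => [a|]; case: y => [b|] //=; rewrite !leoE.
by apply/idP/idP => /negP h; apply/negP => h'; apply: h;
  [apply: lt_addl | apply: lt_addl_inv h'].
Qed.

Lemma P3_mul c x y z :
  P3 (T_mul (Some c) x) (T_mul (Some c) y) (T_mul (Some c) z) <-> P3 x y z.
Proof. by rewrite /P3 !leT_mul. Qed.

Lemma mulK (c : G) x : T_mul (Some c) (T_mul (Some (- c)) x) = x.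
Proof. case: x => [a|] //=; by rewrite addrA subrr add0r. Qed.

Lemma leT_None x : leT x None. Proof. by case: x. Qed.
Lemma leT_None' x : leT None x -> x = None. Proof. by case: x. Qed.

Lemma P3_zero x y : P3 x y None -> y = x.
Proof.
case=> h1 h2 _; apply: leT_anti.
- by case/orP: h1 => // /leT_None' ->; rewrite leT_None.
- by case/orP: h2 => // /leT_None' ->; rewrite leT_None.
Qed.

Lemma P3_S (S : option G -> Prop) x y w :
  (forall x y, S x -> leT x y -> S y) -> S x -> S y -> P3 x y w -> S w.
Proof. by move=> up Sx Sy [_ _ /orP[]] h; [apply: up Sx h|apply: up Sy h]. Qed.

Lemma hyper_gen (S : option G -> Prop) :
  S None ->
  (forall x y, S x -> leT x y -> S y) ->
  (forall x y, S x -> S y -> S (T_mul x y)) ->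
  relational_subhyperring (T_hadd lt) (@T_mul G) (T_zero G) S.
Proof.
move=> S0 up Smul; split => //.
have setl : forall x y z w, S x -> S y ->
   (hadd_set_l (T_hadd lt) S (hadd_on (T_hadd lt) S x y) z w <-> P4 x y z w /\ S w).
  move=> x y z w Sx Sy; split.
    case=> a [[/hadd_P3 h1 Sa] [/hadd_P3 h2 Sw]]; split => //.
    by apply/assoc_P4; exists a.
  case=> /assoc_P4 [a [h1 h2]] Sw; exists a; split; split => //; try exact/hadd_P3.
  exact: P3_S h1.
split => //; split.
  move=> x y z w Sx Sy Sz; rewrite setl //; split.
    case=> /P4_rot' /assoc_P4 [a [h1 h2]] Sw; exists a; split; split => //;
      try apply/hadd_P3 => //; [exact: P3_S h1 | exact: P3_sym12].
  case=> a [[/hadd_P3 h1 Sa] [/hadd_P3 h2 Sw]]; split => //.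
  by apply: P4_rot; apply/assoc_P4; exists a; split => //; apply: P3_sym12.
split.
  by move=> x y w _ _; split; case=> /hadd_P3 h Sw; split => //; apply/hadd_P3; apply: P3_sym12.
split.
  move=> x w Sx; split.
    case=> /hadd_P3 [h1 _ h3] _; apply: leT_anti.
    - by case/orP: h1 => // /leT_None' ->; rewrite leT_None.
    - by case/orP: h3 => // /leT_None' ->; rewrite leT_None.
  move=> ->; split => //; apply/hadd_P3; split; by rewrite ?leT_refl ?leT_None ?orbT.
split.
  move=> x Sx; exists x; split => //.
    split => //; apply/hadd_P3; split; by rewrite ?leT_refl ?leT_None ?orbT.
  by move=> y' _ [/hadd_P3 h _]; exact: P3_zero h.
split.
  move=> x y z nx Sx Sy Sz Snx [/hadd_P3 /P3_zero e _] [/hadd_P3 h _].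
  subst nx; split => //; apply/hadd_P3; by do 2 apply: P3_rot.
split.
  by move=> [a|] [b|] _ _ //=; rewrite addrC.
split.
  by move=> [a|] [b|] [c|] _ _ _ //=; rewrite addrA.
split => //.
move=> [c|] y z w Sx Sy Sz; last first.
  split.
    by case=> a [_ ->]; split => //; apply/hadd_P3; split; rewrite ?leT_None.
  case=> /hadd_P3 /P3_rot /P3_zero -> _.
  case/orP: (leT_total y z) => l.
  - exists y; split => //; split => //; apply/hadd_P3; split; by rewrite ?leT_refl ?l ?orbT.
  - exists z; split => //; split => //; apply/hadd_P3; split; by rewrite ?leT_refl ?l ?orbT.
split.
  case=> a [[/hadd_P3 h Sa] ->]; split; last exact: Smul.
  by apply/hadd_P3; apply/P3_mul.
case=> /hadd_P3 h Sw; exists (T_mul (Some (-c)) w); rewrite mulK; split => //.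
have h' : P3 y z (T_mul (Some (- c)) w) by apply/(P3_mul c); rewrite mulK.
split; [exact/hadd_P3|exact: P3_S h'].
Qed.


Section Conv.
Variable D : G -> Prop.
Hypothesis HD : convex_subgroup lt D.

Lemma D0 : D 0. Proof. by case: HD => [[]]. Qed.
Lemma DB a b : D a -> D b -> D (a - b). Proof. by case: HD => [[_ h] _]; apply: h. Qed.
Lemma DN a : D a -> D (- a). Proof. by move=> h; rewrite -sub0r; apply: DB => //; apply: D0. Qed.
Lemma DD a b : D a -> D b -> D (a + b).
Proof. by move=> ha hb; rewrite -(opprK b); apply: DB => //; apply: DN. Qed.
Lemma Dconv d1 g d2 : D d1 -> D d2 -> lt d1 g -> lt g d2 -> D g.
Proof. by case: HD => _ h; apply: h. Qed.

Lemma O_up x y : O_of lt D x -> leT x y -> O_of lt D y.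
Proof.
case: x => [a|]; case: y => [c|] //=; rewrite leoE => ha hl.
case: (ltgt a c) => [h|<-//|h]; last by move: hl; rewrite h.
case: ha => [Da|ha]; last by right => d /ha h'; apply: lt_trans h' h.
case: (classic (D c)) => Dc; [by left|right] => d Dd.
case: (ltgt d c) => [//|e|h']; first by case: Dc; rewrite -e.
by case: Dc; apply: Dconv Da Dd h h'.
Qed.

Lemma O_mul x y : O_of lt D x -> O_of lt D y -> O_of lt D (T_mul x y).
Proof.
case: x => [a|]; case: y => [b|] //= [Da|ha] [Db|hb].
- by left; apply: DD.
- right => d Dd; have := lt_addr a (hb _ (DB Dd Da)).
  by rewrite subrK addrC.
- right => d Dd; have := lt_addl b (ha _ (DB Dd Db)).
  by rewrite addrC subrK addrC.
- right => d Dd; apply: lt_trans (ha _ Dd) _.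
  have := lt_addr a (hb _ D0); by rewrite add0r addrC.
Qed.

Lemma part1 : T_valuation_hyperring lt (O_of lt D).
Proof.
split.
  apply: hyper_gen => //; [exact: O_up|exact: O_mul].
case=> [g|] // _; rewrite /T_inv /=.
case: (classic (D g)) => Dg; first by left; left.
case: (classic (forall d, D d -> lt d g)) => hg; first by left; right.
right; right => d Dd.
have hlt : forall d', D d' -> lt g d'.
  move=> d' Dd'; case: (ltgt g d') => [//|e|h]; first by case: Dg; rewrite e.
  case: hg => d'' Dd''; case: (ltgt d'' g) => [//|e|h'].
    by case: Dg; rewrite -e.
  by case: Dg; apply: Dconv Dd' Dd'' h h'.
by have := lt_opp (hlt _ (DN Dd)); rewrite opprK.
Qed.
End Conv.

Lemma part2_aux (D1 D2 : G -> Prop) : convex_subgroup lt D1 -> convex_subgroup lt D2 ->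
  (forall x, O_of lt D1 x -> O_of lt D2 x) -> forall g, D1 g -> D2 g.
Proof.
move=> H1 H2 H g Dg.
case: (classic (D2 g)) => // nD.
have := H (Some g) (or_introl Dg); case=> // hg.
have := H (Some (-g)) (or_introl (DN H1 Dg)); case=> [hn|hn].
  by case: nD; rewrite -(opprK g); apply: DN.
have l1 := hg _ (D0 H2); have l2 := hn _ (D0 H2).
have := lt_addr (-g) l1; rewrite add0r subrr => l3.
by move: (lt_irr 0); rewrite (lt_trans l2 l3).
Qed.

Lemma part3 (O : option G -> Prop) : T_valuation_hyperring lt O ->
  exists D : G -> Prop, convex_subgroup lt D /\ forall x, O x <-> O_of lt D x.
Proof.
case=> [[Smul Hh] Hval].
case: Hh => S0 [_ [_ [_ [_ [_ [_ [_ [_ dist]]]]]]]].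
have O0 : O (Some 0).
  by case: (Hval (Some 0)) => //=; rewrite oppr0.
have negcl : forall e, O (Some e) -> lt e 0 -> O (Some (- e)).
  move=> e Oe le.
  have [] := (dist (Some e) (Some 0) (Some 0) (Some 0) Oe O0 O0).2.
    split => //; apply/hadd_P3 => /=; split; rewrite ?leT_refl ?orbT //=.
    by rewrite leoE addr0 lt_asym.
  case=> [f|] [[_ Of]] //= [e'].
  by move/eqP: e'; rewrite eq_sym addrC addr_eq0 => /eqP <-.
have upcl : forall a c, O (Some a) -> lt a c -> O (Some c).
  move=> a c Oa l; case: (Hval (Some c)) => //= Oc.
  have Oe : O (Some (a - c)) by apply: (Smul (Some a) (Some (- c))).
  have le : lt (a - c) 0 by have := lt_addr (-c) l; rewrite subrr.
  have := Smul _ _ Oa (negcl _ Oe le) => /=.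
  by rewrite opprB addrCA subrr addr0.
exists (fun g => O (Some g) /\ O (Some (- g))).
have Dneg : forall g, O (Some g) -> ~ O (Some (- g)) -> forall d, O (Some d) -> O (Some (- d)) -> lt d g.
  move=> g Og nOg d Od Odn; case: (ltgt d g) => [//|e|h]; first by case: nOg; rewrite -e.
  by case: nOg; apply: upcl Odn (lt_opp h).
split.
  split.
    split; first by rewrite oppr0.
    move=> a b [Oa Oan] [Ob Obn]; split.
      exact: (Smul (Some a) (Some (- b))).
    rewrite opprB addrC; exact: (Smul (Some (- a)) (Some b)).
  move=> d1 g d2 [Od1 _] [_ Od2] l1 l2; split.
    exact: upcl Od1 l1.
  exact: upcl Od2 (lt_opp l2).
case=> [g|] /=; last by split.
split.
  move=> Og; case: (classic (O (Some (- g)))) => h; [by left|right].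
  move=> d [Od Odn]; exact: Dneg.
case=> [[]//|h]; apply: (upcl 0) => //; apply: h; split=> //; by rewrite oppr0.
Qed.

End Proof.

Theorem mainTheorem16 (G : zmodType) (lt : rel G) (HG : ordered_abgroup lt) :
  (* well-defined: O_Δ is a valuation hyperring for every convex subgroup Δ *)
  (forall D : G -> Prop, convex_subgroup lt D -> T_valuation_hyperring lt (O_of lt D))
  /\
  (* injective *)
  (forall D1 D2 : G -> Prop, convex_subgroup lt D1 -> convex_subgroup lt D2 ->
     (forall x, O_of lt D1 x <-> O_of lt D2 x) -> forall g, D1 g <-> D2 g)
  /\
  (* surjective *)
  (forall O : option G -> Prop, T_valuation_hyperring lt O ->
     exists D : G -> Prop, convex_subgroup lt D /\ forall x, O x <-> O_of lt D x).
Proof.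
split; first by move=> D HD; exact: (part1 HG HD).
split; last by move=> O HO; exact: (part3 HG HO).
move=> D1 D2 H1 H2 H g; split; apply: (part2_aux HG) => // x; by case: (H x).
Qed.
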